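(* Let $R$ be the semiring $\mathbb{N}[T_1,T_2,T_3,T_4]/\langle T_1T_4\sim T_2T_3+1\rangle$, i.e. the quotient of the polynomial semiring over $\mathbb{N}$ by the smallest congruence containing the relation $T_1T_4\sim T_2T_3+1$, and let $A\subset R$ be the multiplicative subset consisting of $0$ and the images of all monomials $T_1^{e_1}T_2^{e_2}T_3^{e_3}T_4^{e_4}$ ($e_i\geq 0$). Let $B=(R,A)$ be the corresponding blueprint. Then the prime $k$-ideals of $B$ are exactly the following seven sets: $\{0\}$, $(T_1)$, $(T_2)$, $(T_3)$, $(T_4)$, $(T_1,T_4)$ and $(T_2,T_3)$, where $(T_i)_{i\in I}$ denotes the monoid ideal of $A$ generated by $\{T_i: i\in I\}$. In particular, $\operatorname{Spec}B$ has exactly seven points, its closed points being $(T_1,T_4)$ and $(T_2,T_3)$.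
   Context: A semiring is a set with commutative associative addition with neutral element $0$ and commutative associative multiplication with neutral element $1$, with $0$ absorbing and multiplication distributing over addition (no additive inverses required). A congruence on a semiring is an equivalence relation compatible with addition and multiplication. A blueprint is a pair $B=(R,A)$ of a semiring $R=B^+$ and a multiplicative subset $A=B^\bullet$ of $R$ containing $0$ and $1$ that generates $R$ as a semiring. An ideal of the monoid $B^\bullet$ is a subset $I$ with $0\in I$ and $ab\in I$ for all $a\in I$, $b\in B^\bullet$; the ideal generated by a subset is the smallest ideal containing it. A $k$-ideal of $B$ is an ideal $I$ of $B^\bullet$ such that $c\in I$ whenever $c\in B^\bullet$ and there are $a_1,\dots,a_n,b_1,\dots,b_m\in I$ with $\sum a_i+c=\sum b_j$ in $B^+$. A $k$-ideal $\mathfrak p$ is prime if $B^\bullet\setminus\mathfrak p$ contains $1$ and is closed under multiplication. $\operatorname{Spec}B$ is the set of prime $k$-ideals with the topology generated by the sets $U_h=\{\mathfrak p: h\notin\mathfrak p\}$, $h\in B^\bullet$. *)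

(* Defs.v *)
From mathcomp Require Import all_boot.
Set Implicit Arguments.
Unset Strict Implicit.
Unset Printing Implicit Defensive.

(* A monomial T1^e1 T2^e2 T3^e3 T4^e4 is its exponent vector. *)
Definition mon := (nat * nat * nat * nat)%type.

Definition mon1 : mon := (0, 0, 0, 0).
Definition T1 : mon := (1, 0, 0, 0).
Definition T2 : mon := (0, 1, 0, 0).
Definition T3 : mon := (0, 0, 1, 0).
Definition T4 : mon := (0, 0, 0, 1).

Definition monmul (a b : mon) : mon :=
  let: (a1, a2, a3, a4) := a in
  let: (b1, b2, b3, b4) := b in (a1 + b1, a2 + b2, a3 + b3, a4 + b4).

(* An element of the free semiring N[T1,..,T4] is a finite formal sum of
   monomials, i.e. a list of monomials up to permutation. *)
Definition npoly := seq mon.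
Definition padd (p q : npoly) : npoly := p ++ q.
Definition pmul (p q : npoly) : npoly := [seq monmul a b | a <- p, b <- q].

(* The smallest congruence on N[T1,..,T4] containing T1T4 ~ T2T3 + 1
   (permutation of summands = equality in N[T]). *)
Inductive cong : npoly -> npoly -> Prop :=
| cong_perm p q : perm_eq p q -> cong p q
| cong_gen : cong [:: monmul T1 T4] [:: monmul T2 T3; mon1]
| cong_sym p q : cong p q -> cong q p
| cong_trans p q r : cong p q -> cong q r -> cong p r
| cong_add p q r : cong p q -> cong (padd p r) (padd q r)
| cong_mul p q r : cong p q -> cong (pmul p r) (pmul q r).

(* Representatives of elements of A = B^bullet: None is 0, Some e the monomial e. *)
Definition elt := option mon.
Definition toP (x : elt) : npoly := if x is Some e then [:: e] else [::].
Definition emul (x y : elt) : elt :=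
  match x, y with Some a, Some b => Some (monmul a b) | _, _ => None end.
Definition eq_R (x y : elt) : Prop := cong (toP x) (toP y).

(* A subset of B^bullet, given on representatives; it must be saturated,
   i.e. depend only on the class in R. *)
Definition saturated (I : elt -> Prop) : Prop :=
  forall x y, eq_R x y -> I x -> I y.

Definition sameset (I J : elt -> Prop) : Prop := forall x, I x <-> J x.

Definition is_ideal (I : elt -> Prop) : Prop :=
  I None /\ forall a b, I a -> I (emul a b).

Definition sumE (s : seq elt) : npoly := flatten (map toP s).

Definition is_k_ideal (I : elt -> Prop) : Prop :=
  is_ideal I /\
  forall (c : elt) (as_ bs : seq elt),
    (forall a, a \in as_ -> I a) -> (forall b, b \in bs -> I b) ->
    cong (padd (sumE as_) (toP c)) (sumE bs) -> I c.

Definition is_prime_k_ideal (I : elt -> Prop) : Prop :=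
  is_k_ideal I /\ ~ I (Some mon1) /\
  forall a b, ~ I a -> ~ I b -> ~ I (emul a b).

Definition gen_ideal (S : elt -> Prop) (x : elt) : Prop :=
  eq_R x None \/ exists s a, S s /\ eq_R x (emul s a).

Definition gens (l : seq mon) (s : elt) : Prop :=
  exists2 m, m \in l & s = Some m.

Inductive point := P0 | PT1 | PT2 | PT3 | PT4 | PT14 | PT23.

Definition pt_ideal (p : point) : elt -> Prop :=
  match p with
  | P0 => fun x => eq_R x None
  | PT1 => gen_ideal (gens [:: T1])
  | PT2 => gen_ideal (gens [:: T2])
  | PT3 => gen_ideal (gens [:: T3])
  | PT4 => gen_ideal (gens [:: T4])
  | PT14 => gen_ideal (gens [:: T1; T4])
  | PT23 => gen_ideal (gens [:: T2; T3])
  end.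

(* {P} is closed in Spec B (topology generated by U_h = {q | h not in q}):
   every other point Q has a neighbourhood, a finite intersection of U_h's,
   that does not contain P. *)
Definition closed_point (P : elt -> Prop) : Prop :=
  forall Q, saturated Q -> is_prime_k_ideal Q -> ~ sameset Q P ->
    exists hs : seq elt, (forall h, h \in hs -> ~ Q h) /\ (exists2 h, h \in hs & P h).

(* Main.v *)
Require Import Defs.
From mathcomp Require Import all_boot.
From mathcomp Require Import all_algebra ring.
From Stdlib Require Import Classical.
Import GRing.Theory.

Local Open Scope ring_scope.

Definition tup := (int * int * int * int)%type.
Definition mev (t : tup) (m : Defs.mon) : int :=
  let: (t1,t2,t3,t4) := t in let: (e1,e2,e3,e4) := m in
  t1 ^+ e1 * t2 ^+ e2 * t3 ^+ e3 * t4 ^+ e4.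
Definition pev t (p : Defs.npoly) : int := \sum_(m <- p) mev t m.
Definition good (t : tup) := let: (t1,t2,t3,t4) := t in t1 * t4 = t2 * t3 + 1.

Lemma mev_mul t a b : mev t (monmul a b) = mev t a * mev t b.
Proof.
case: t => [[[t1 t2] t3] t4]; case: a => [[[a1 a2] a3] a4];
case: b => [[[b1 b2] b3] b4] /=.
rewrite !exprD; ring.
Qed.

Lemma pev_cat t p q : pev t (p ++ q) = pev t p + pev t q.
Proof. by rewrite /pev big_cat. Qed.

Lemma pev_mul t p r : pev t (pmul p r) = pev t p * pev t r.
Proof.
elim: p => [|a p IH]; first by rewrite /pev big_nil mul0r.
have -> : pmul (a :: p) r = map (monmul a) r ++ pmul p r by [].
rewrite pev_cat IH /pev big_cons mulrDl big_map.
congr (_ + _); rewrite mulr_sumr; apply: eq_bigr => m _; exact: mev_mul.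
Qed.

Lemma cong_pev t p q : good t -> cong p q -> pev t p = pev t q.
Proof.
move=> gt; elim => {p q}.
- move=> p q H; exact: perm_big.
- case: t gt => [[[t1 t2] t3] t4] /= gt.
  rewrite /pev !big_cons !big_nil /=.
  transitivity (t1 * t4); first ring.
  by rewrite gt; ring.
- by move=> p q _ ->.
- by move=> p q r _ -> _ ->.
- by move=> p q r _ H; rewrite !pev_cat H.
- by move=> p q r _ H; rewrite !pev_mul H.
Qed.

Lemma pevS t m : pev t [:: m] = mev t m.
Proof. by rewrite /pev big_cons big_nil addr0. Qed.
Lemma pev0 t : pev t [::] = 0.
Proof. by rewrite /pev big_nil. Qed.

Lemma pev_emul t a b : pev t (toP (emul a b)) = pev t (toP a) * pev t (toP b).
Proof.
case: a => [a|]; case: b => [b|] /=; rewrite ?pevS ?pev0 ?mul0r ?mulr0 //.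
exact: mev_mul.
Qed.

Definition kbz (b : bool * bool * bool * bool) (m : Defs.mon) : bool :=
  let: (b1,b2,b3,b4) := b in let: (e1,e2,e3,e4) := m in
  [|| (0 < e1)%N && b1, (0 < e2)%N && b2, (0 < e3)%N && b3 | (0 < e4)%N && b4].

Lemma mevE t m : (mev t m == 0) =
  kbz (let: (t1,t2,t3,t4) := t in (t1 == 0, t2 == 0, t3 == 0, t4 == 0)) m.
Proof.
case: t => [[[t1 t2] t3] t4]; case: m => [[[e1 e2] e3] e4] /=.
by rewrite !mulf_eq0 !expf_eq0 -!orbA.
Qed.

Definition tp (p : point) : tup :=
  match p with
  | P0 => (2,1,1,1) | PT1 => (0,1,-1,1) | PT2 => (1,0,1,1) | PT3 => (1,1,0,1)
  | PT4 => (1,1,-1,0) | PT14 => (0,1,-1,0) | PT23 => (1,0,0,1) end.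

Definition zp (p : point) : bool * bool * bool * bool :=
  match p with
  | P0 => (false,false,false,false) | PT1 => (true,false,false,false)
  | PT2 => (false,true,false,false) | PT3 => (false,false,true,false)
  | PT4 => (false,false,false,true) | PT14 => (true,false,false,true)
  | PT23 => (false,true,true,false) end.

Lemma good_tp p : good (tp p).
Proof. by case: p. Qed.

Lemma mev_tp p m : (mev (tp p) m == 0) = kbz (zp p) m.
Proof. by rewrite mevE; case: p. Qed.

Lemma eqR_refl x : eq_R x x.
Proof. by apply: cong_perm; exact: perm_refl. Qed.

Lemma pevS0 t m : pev t [:: m] = 0 <-> kbz (let: (t1,t2,t3,t4) := t in (t1 == 0, t2 == 0, t3 == 0, t4 == 0)) m.
Proof. by rewrite pevS -mevE; split => [->|/eqP]. Qed.

Lemma gen_dec S m :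
  (exists2 x : Defs.mon, S (Some x) & exists m', m = monmul x m') -> gen_ideal S (Some m).
Proof.
case=> x Sx [m' ->]; right; exists (Some x), (Some m'); split => //; exact: eqR_refl.
Qed.

Lemma decT1 e1 e2 e3 e4 : (0 < e1)%N -> (e1,e2,e3,e4) = monmul T1 (e1.-1,e2,e3,e4).
Proof. by case: e1. Qed.
Lemma decT2 e1 e2 e3 e4 : (0 < e2)%N -> (e1,e2,e3,e4) = monmul T2 (e1,e2.-1,e3,e4).
Proof. by case: e2. Qed.
Lemma decT3 e1 e2 e3 e4 : (0 < e3)%N -> (e1,e2,e3,e4) = monmul T3 (e1,e2,e3.-1,e4).
Proof. by case: e3. Qed.
Lemma decT4 e1 e2 e3 e4 : (0 < e4)%N -> (e1,e2,e3,e4) = monmul T4 (e1,e2,e3,e4.-1).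
Proof. by case: e4. Qed.

Lemma ptE p x : pt_ideal p x <-> pev (tp p) (toP x) = 0.
Proof.
split.
- have gz : forall l, all (fun m => mev (tp p) m == 0) l ->
      gen_ideal (gens l) x -> pev (tp p) (toP x) = 0.
    move=> l /allP hl [H|[s [a [[m ml ->] H]]]].
    + by rewrite (cong_pev _ _ _ (good_tp p) H) pev0.
    + rewrite (cong_pev _ _ _ (good_tp p) H) pev_emul /= pevS.
      by move/eqP: (hl m ml) => ->; rewrite mul0r.
  case: p gz => /= gz; try (apply: gz; done).
  by move=> H; rewrite (cong_pev _ _ _ (good_tp P0) H) pev0.
- case: x => [m|] /=; last first.
    by move=> _; case: p => /=; try (left); exact: eqR_refl.
  move=> H; move: (proj1 (pevS0 _ _) H); clear H; case: m => [[[e1 e2] e3] e4].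
  case: p => /=; rewrite ?andbT ?andbF ?orbF //=.
  + by move=> h; apply: gen_dec; exists T1 => //; [exists T1 | exists (e1.-1,e2,e3,e4); exact: decT1].
  + by move=> h; apply: gen_dec; exists T2 => //; [exists T2 | exists (e1,e2.-1,e3,e4); exact: decT2].
  + by move=> h; apply: gen_dec; exists T3 => //; [exists T3 | exists (e1,e2,e3.-1,e4); exact: decT3].
  + by move=> h; apply: gen_dec; exists T4 => //; [exists T4 | exists (e1,e2,e3,e4.-1); exact: decT4].
  + case/orP => h; apply: gen_dec.
    * by exists T1 => //; [exists T1 | exists (e1.-1,e2,e3,e4); exact: decT1].
    * by exists T4 => //; [exists T4 | exists (e1,e2,e3,e4.-1); exact: decT4].
  + case/orP => h; apply: gen_dec.
    * by exists T2 => //; [exists T2 | exists (e1,e2.-1,e3,e4); exact: decT2].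
    * by exists T3 => //; [exists T3 | exists (e1,e2,e3.-1,e4); exact: decT3].
Qed.

Lemma pev_sumE t s : (forall a, a \in s -> pev t (toP a) = 0) -> pev t (sumE s) = 0.
Proof.
elim: s => [|a s IH] H; first by rewrite pev0.
have -> : sumE (a :: s) = toP a ++ sumE s by [].
rewrite pev_cat H ?inE ?eqxx // IH ?add0r // => b bs.
by apply: H; rewrite inE bs orbT.
Qed.

Lemma mev1 t : mev t mon1 = 1.
Proof. by case: t => [[[t1 t2] t3] t4]; rewrite /= !expr0 !mulr1. Qed.

Lemma pt_prime p : is_prime_k_ideal (pt_ideal p).
Proof.
split; [split; [split|]|split].
- by apply/ptE; rewrite pev0.
- by move=> a b /ptE Ha; apply/ptE; rewrite pev_emul Ha mul0r.
- move=> c as_ bs Ha Hb H; apply/ptE.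
  have := cong_pev _ _ _ (good_tp p) H.
  rewrite pev_cat (pev_sumE _ bs) ?(pev_sumE _ as_) ?add0r //.
  + by move=> a /Ha /ptE.
  + by move=> a /Hb /ptE.
- by move/ptE; rewrite /= pevS mev1 => /eqP; rewrite oner_eq0.
- move=> a b /ptE Ha /ptE Hb /ptE; rewrite pev_emul => /eqP.
  by rewrite mulf_eq0 => /orP [/eqP|/eqP].
Qed.

Lemma pt_sat p : saturated (pt_ideal p).
Proof.
move=> x y H /ptE Hx; apply/ptE.
by rewrite -(cong_pev _ _ _ (good_tp p) H).
Qed.

Lemma prime_transfer I J : sameset I J -> is_prime_k_ideal J -> is_prime_k_ideal I.
Proof.
move=> E [[[J0 Jm] Jk] [J1 Jp]]; split; [split; [split|]|split].
- exact/E.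
- by move=> a b /E Ha; apply/E; apply: Jm.
- move=> c as_ bs Ha Hb H; apply/E; apply: (Jk c as_ bs) => // a.
  + by move/Ha/E.
  + by move/Hb/E.
- by move/E.
- by move=> a b /E Ha /E Hb /E; apply: Jp.
Qed.

Lemma pt_kbz p m : pt_ideal p (Some m) <-> kbz (zp p) m.
Proof.
rewrite ptE /= pevS -mev_tp; split; [by move=> ->|by move/eqP].
Qed.

Lemma pt_inj p q : sameset (pt_ideal p) (pt_ideal q) -> p = q.
Proof.
move=> E.
have H : forall m, kbz (zp p) m = kbz (zp q) m.
  by move=> m; apply/idP/idP => /pt_kbz /E /pt_kbz.
move: (H T1) (H T2) (H T3) (H T4); clear E H.
by case: p; case: q => //=.
Qed.

Lemma iter1 e a b c d : iter e (monmul T1) (a,b,c,d) = ((e + a)%N,b,c,d).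
Proof. by elim: e => //= e ->. Qed.
Lemma iter2 e a b c d : iter e (monmul T2) (a,b,c,d) = (a,(e + b)%N,c,d).
Proof. by elim: e => //= e ->. Qed.
Lemma iter3 e a b c d : iter e (monmul T3) (a,b,c,d) = (a,b,(e + c)%N,d).
Proof. by elim: e => //= e ->. Qed.
Lemma iter4 e a b c d : iter e (monmul T4) (a,b,c,d) = (a,b,c,(e + d)%N).
Proof. by elim: e => //= e ->. Qed.

Lemma mon_iter e1 e2 e3 e4 : (e1,e2,e3,e4) =
  iter e1 (monmul T1) (iter e2 (monmul T2) (iter e3 (monmul T3) (iter e4 (monmul T4) mon1))).
Proof. by rewrite /mon1 iter4 iter3 iter2 iter1 !addn0. Qed.

Section Prime.
Variable I : elt -> Prop.
Hypothesis HI : is_prime_k_ideal I.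

Lemma notI_iter x e m0 : (e = 0%N \/ ~ I (Some x)) -> ~ I (Some m0) ->
  ~ I (Some (iter e (monmul x) m0)).
Proof.
case: HI => _ [_ Hp] He Hm; elim: e He => [|e IH] He //=.
have Hx : ~ I (Some x) by case: He.
exact: (Hp (Some x) (Some _) Hx (IH (or_intror Hx))).
Qed.

Lemma I_ideal a b : I a -> I (emul a b).
Proof. by case: HI => [[[_ H] _] _]; apply: H. Qed.

Lemma Imon (b1 b2 b3 b4 : bool) :
  (I (Some T1) <-> b1) -> (I (Some T2) <-> b2) -> (I (Some T3) <-> b3) -> (I (Some T4) <-> b4) ->
  forall m, I (Some m) <-> kbz (b1,b2,b3,b4) m.
Proof.
move=> E1 E2 E3 E4 [[[e1 e2] e3] e4]; split.
- move=> H; apply/negPn/negP => /= Hn.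
  move: H; rewrite mon_iter.
  have cond : forall (e : nat) (b : bool) x, (I (Some x) <-> b) -> ~~ ((0 < e)%N && b) ->
      e = 0%N \/ ~ I (Some x).
    move=> e b x Ex; case: e => [|e]; [by left|] => /= Hb; right => /Ex Hb'.
    by rewrite Hb' in Hb.
  move: Hn; rewrite !negb_or => /and4P [h1 h2 h3 h4].
  apply: notI_iter; first exact: (cond _ _ _ E1).
  apply: notI_iter; first exact: (cond _ _ _ E2).
  apply: notI_iter; first exact: (cond _ _ _ E3).
  apply: notI_iter; first exact: (cond _ _ _ E4).
  by case: HI => _ [].
- case/or4P => /andP [he hb].
  + by rewrite (@decT1 e1 e2 e3 e4 he); apply: (I_ideal (Some T1) (Some _)); apply/E1.
  + by rewrite (@decT2 e1 e2 e3 e4 he); apply: (I_ideal (Some T2) (Some _)); apply/E2.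
  + by rewrite (@decT3 e1 e2 e3 e4 he); apply: (I_ideal (Some T3) (Some _)); apply/E3.
  + by rewrite (@decT4 e1 e2 e3 e4 he); apply: (I_ideal (Some T4) (Some _)); apply/E4.
Qed.

Lemma constraint : I (Some (monmul T2 T3)) -> I (Some (monmul T1 T4)) -> False.
Proof.
move=> H23 H14; case: HI => [[_ Hk] [H1 _]]; apply: H1.
apply: (Hk (Some mon1) [:: Some (monmul T2 T3)] [:: Some (monmul T1 T4)]).
- by move=> a; rewrite inE => /eqP ->.
- by move=> a; rewrite inE => /eqP ->.
- rewrite /padd /sumE /=.
apply: cong_sym; exact: cong_gen.
Qed.

Lemma boolI x : exists b : bool, I x <-> b.
Proof.
case: (classic (I x)) => H; [exists true|exists false]; split => //.
Qed.

Lemma prime_class : exists p, sameset I (pt_ideal p).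
Proof.
have [b1 E1] := boolI (Some T1); have [b2 E2] := boolI (Some T2).
have [b3 E3] := boolI (Some T3); have [b4 E4] := boolI (Some T4).
have EM := @Imon _ _ _ _ E1 E2 E3 E4.
have C : ~~ ((b1 || b4) && (b2 || b3)).
  apply/negP => /andP [h14 h23]; apply: constraint.
  + case/orP: h23 => h; first exact: (I_ideal (Some T2) (Some T3) (proj2 E2 h)).
    exact: (I_ideal (Some T3) (Some T2) (proj2 E3 h)).
  + case/orP: h14 => h; first exact: (I_ideal (Some T1) (Some T4) (proj2 E1 h)).
    exact: (I_ideal (Some T4) (Some T1) (proj2 E4 h)).
have [p Hp] : exists p, zp p = (b1,b2,b3,b4).
  move: C; clear EM E1 E2 E3 E4; case: b1; case: b2; case: b3; case: b4 => //= _.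
  all: try (by exists P0); try (by exists PT1); try (by exists PT2); try (by exists PT3).
  all: try (by exists PT4); try (by exists PT14); try (by exists PT23).
exists p => [[m|]].
- by rewrite EM pt_kbz Hp.
- split => _; last by case: HI => [[[]]].
  by apply/ptE; rewrite pev0.
Qed.
End Prime.

Lemma wit (Q : elt -> Prop) p q m : kbz (zp p) m -> ~~ kbz (zp q) m ->
  sameset Q (pt_ideal q) ->
  exists hs : seq elt, (forall h, h \in hs -> ~ Q h) /\ (exists2 h, h \in hs & pt_ideal p h).
Proof.
move=> Hp Hq E; exists [:: Some m]; split.
- move=> h; rewrite inE => /eqP -> /E /pt_kbz H.
  by rewrite H in Hq.
- by exists (Some m); rewrite ?inE ?eqxx //; apply/pt_kbz.
Qed.

Lemma closed_iff p : closed_point (pt_ideal p) <-> (p = PT14 \/ p = PT23).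
Proof.
split.
- move=> H.
  have key : forall q, p <> q -> (forall m, kbz (zp p) m -> kbz (zp q) m) -> False.
    move=> q ne sub.
    have [hs [Hn [h hin Ph]]] := H (pt_ideal q) (pt_sat q) (pt_prime q)
        (fun E => ne (esym (pt_inj _ _ E))).
    apply: (Hn h hin); case: h Ph {hin} => [m|] Ph.
    + by apply/pt_kbz; apply: sub; apply/pt_kbz.
    + by apply/ptE; rewrite pev0.
  case: p H key => H key; try by [left|right].
  + by exfalso; apply: (key PT14) => //; move=> [[[e1 e2] e3] e4]; rewrite /= !andbF.
  + exfalso; apply: (key PT14) => //; move=> [[[e1 e2] e3] e4] /=.
    by rewrite ?andbT ?andbF ?orbF /= => h; rewrite h ?orbT.
  + exfalso; apply: (key PT23) => //; move=> [[[e1 e2] e3] e4] /=.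
    by rewrite ?andbT ?andbF ?orbF /= => h; rewrite h ?orbT.
  + exfalso; apply: (key PT23) => //; move=> [[[e1 e2] e3] e4] /=.
    by rewrite ?andbT ?andbF ?orbF /= => h; rewrite h ?orbT.
  + exfalso; apply: (key PT14) => //; move=> [[[e1 e2] e3] e4] /=.
    by rewrite ?andbT ?andbF ?orbF /= => h; rewrite h ?orbT.
- move=> Hp Q Qs Qp Qne.
  have [q E] := prime_class _ Qp.
  have ne : q <> p by move=> eq; apply: Qne; rewrite -eq.
  case: Hp => ?; subst p; case: q E ne => E ne; try (by case: ne).
  all: try (by apply: (wit _ _ _ T1 _ _ E)).
  all: try (by apply: (wit _ _ _ T2 _ _ E)).
  all: try (by apply: (wit _ _ _ T3 _ _ E)).
  all: try (by apply: (wit _ _ _ T4 _ _ E)).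
Qed.

Theorem mainTheorem1 :
  (forall I : elt -> Prop, saturated I ->
     (is_prime_k_ideal I <-> exists p : point, sameset I (pt_ideal p))) /\
  (forall p q : point, sameset (pt_ideal p) (pt_ideal q) -> p = q) /\
  (forall p : point, closed_point (pt_ideal p) <-> (p = PT14 \/ p = PT23)).
Proof.
split; [|split].
- move=> I _; split; first exact: prime_class.
  case=> p E; apply: (prime_transfer _ _ E); exact: pt_prime.
- exact: pt_inj.
- exact: closed_iff.
Qed.
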